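(* Let $\gamma$ be the Euler–Mascheroni constant, $\zeta$ the Riemann zeta function (meromorphically continued) and $\eta(s)=\sum_{n\ge1}(-1)^{n-1}n^{-s}$ the Dirichlet eta function. Define, for large real $x$, $g(x)=\bigl|\ln|\ln\eta(x)|\bigr|$ and $h(x)=\ln|\zeta(\eta(x))|$, and let $g^{n},h^{n}$ denote their $n$-th iterates. Then for every integer $n\ge1$, $$\lim_{x\to\infty}2^{x(\ln2)^{n-1}}\bigl[g^{n}(x)-h^{n}(x)\bigr]=\gamma-\frac12 .$$ *)

(* Defs.v *)
From Stdlib Require Import Reals.
From Coquelicot Require Import Coquelicot.
Open Scope R_scope.

(* Euler–Mascheroni constant: lim_{n->oo} (H_n - ln n), with H_n harmonic numbers.
   sum_n f m = f 0 + ... + f m, so the m-th term is H_{m+1} - ln (m+1). *)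
Definition euler_gamma : R :=
  real (Lim_seq (fun m : nat => sum_n (fun k => / INR (k + 1)) m - ln (INR (m + 1)))).

Definition eta (s : R) : R :=
  Series (fun k : nat => (-1) ^ k * Rpower (INR (k + 1)) (- s)).

(* Riemann zeta (analytically continued) at real s > 0, s <> 1, via the
   classical identity zeta(s) = eta(s) / (1 - 2^(1-s)). *)
Definition zeta (s : R) : R := eta s / (1 - Rpower 2 (1 - s)).

Definition g (x : R) : R := Rabs (ln (Rabs (ln (eta x)))).
Definition h (x : R) : R := ln (Rabs (zeta (eta x))).

(* Main.v *)
Require Import Defs.
From Stdlib Require Import Reals.
From Coquelicot Require Import Coquelicot.
From Stdlib Require Import Lra Lia Psatz ZArith.
Open Scope R_scope.

Lemma ln_le_sub1 x : 0 < x -> ln x <= x - 1.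
Proof. intros H. pose proof (exp_ineq1_le (ln x)). rewrite exp_ln in H0; lra. Qed.

Lemma ln_ge_1inv x : 0 < x -> 1 - / x <= ln x.
Proof. intros H. pose proof (ln_le_sub1 (/x) (Rinv_0_lt_compat _ H)).
  rewrite ln_Rinv in H0 by lra. lra. Qed.

Lemma mvt_bounds (f f' : R -> R) a b m M : a <= b ->
  (forall c, a <= c <= b -> derivable_pt_lim f c (f' c)) ->
  (forall c, a <= c <= b -> m <= f' c <= M) ->
  m*(b-a) <= f b - f a <= M*(b-a).
Proof.
  intros Hab Hd Hb. destruct (Req_dec a b) as [->|Hne].
  - replace (b-b) with 0 by ring. lra.
  - destruct (MVT_cor2 f f' a b) as [c [Hc1 Hc2]]; [lra|exact Hd|].
    rewrite Hc1. specialize (Hb c ltac:(lra)). split; apply Rmult_le_compat_r; lra.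
Qed.

Lemma ln_diff_bound p q c : 0 < c -> c <= p -> c <= q -> Rabs (ln p - ln q) <= Rabs (p - q) / c.
Proof.
  intros Hc Hp Hq.
  assert (H1 : ln p - ln q <= (p - q)/q).
  { rewrite <- ln_div by lra. pose proof (ln_le_sub1 (p/q)). 
    replace ((p-q)/q) with (p/q - 1) by (field; lra). apply H. apply Rdiv_lt_0_compat; lra. }
  assert (H2 : ln q - ln p <= (q - p)/p).
  { rewrite <- ln_div by lra. pose proof (ln_le_sub1 (q/p)).
    replace ((q-p)/p) with (q/p - 1) by (field; lra). apply H. apply Rdiv_lt_0_compat; lra. }
  apply Rabs_le. split.
  - assert ((q-p)/p <= Rabs (p-q)/c).
    { unfold Rdiv. destruct (Rle_dec 0 (q-p)).
      + rewrite Rabs_left1 by lra. apply Rmult_le_compat; try lra.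
        apply Rlt_le, Rinv_0_lt_compat; lra. apply Rinv_le_contravar; lra.
      + apply Rle_trans with 0. assert (0 < /p) by (apply Rinv_0_lt_compat; lra). nra.
        apply Rmult_le_pos. apply Rabs_pos. apply Rlt_le, Rinv_0_lt_compat; lra. }
    lra.
  - destruct (Rle_dec 0 (p-q)).
    + rewrite Rabs_right by lra. apply Rle_trans with ((p-q)/q); auto. unfold Rdiv.
      apply Rmult_le_compat_l; auto. apply Rinv_le_contravar; lra.
    + apply Rle_trans with ((p-q)/q); auto. apply Rle_trans with 0.
      assert (0 < /q) by (apply Rinv_0_lt_compat; lra). unfold Rdiv; nra.
      apply Rmult_le_pos. apply Rabs_pos. apply Rlt_le, Rinv_0_lt_compat; lra.
Qed.

Lemma ln1p_le v : -1 < v -> ln (1 + v) <= v.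
Proof. intros. pose proof (ln_le_sub1 (1+v)). lra. Qed.

Lemma ln1p_ge v : -1/2 <= v <= 1/2 -> v - v^2 <= ln (1 + v).
Proof.
  intros Hv. set (F := fun w => ln (1 + w) - w + w^2).
  set (F' := fun w => / (1 + w) - 1 + 2 * w).
  assert (Hd : forall c, -1/2 <= c <= 1/2 -> derivable_pt_lim F c (F' c)).
  { intros c Hc. apply is_derive_Reals. unfold F, F'. auto_derive. lra. field. lra. }
  assert (F0 : F 0 = 0). { unfold F. rewrite Rplus_0_r, ln_1. ring. }
  cut (0 <= F v). { unfold F. lra. }
  destruct (Rle_dec 0 v).
  - destruct (mvt_bounds F F' 0 v 0 2 ltac:(lra)) as [H1 _].
    + intros c Hc. apply Hd. lra.
    + intros c Hc. unfold F'. split.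
      * assert (/(1+c) >= 1 - c). { apply Rle_ge. 
          apply Rmult_le_reg_l with (1+c). lra. rewrite Rinv_r by lra. nra. } nra.
      * assert (/(1+c) <= 1). { rewrite <- Rinv_1. apply Rinv_le_contravar; lra. } lra.
    + lra.
  - destruct (mvt_bounds F F' v 0 (-2) 0 ltac:(lra)) as [_ H1].
    + intros c Hc. apply Hd. lra.
    + intros c Hc. unfold F'. split.
      * assert (/(1+c) >= 0). { apply Rle_ge, Rlt_le, Rinv_0_lt_compat; lra. } lra.
      * assert (/(1+c) <= 1 - c + 2 * c^2). { 
          apply Rmult_le_reg_l with (1+c). lra. rewrite Rinv_r by lra. nra. } nra.
    + lra.
Qed.

Lemma mln1m_bounds t : 0 <= t <= 1/2 ->
  t + t^2/2 <= - ln (1 - t) <= t + t^2/2 + t^3.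
Proof.
  intros Ht. split.
  - set (F := fun w => - ln (1 - w) - w - w^2/2).
    set (F' := fun w => / (1 - w) - 1 - w).
    destruct (mvt_bounds F F' 0 t 0 1 ltac:(lra)) as [H1 _].
    + intros c Hc. apply is_derive_Reals. unfold F, F'. auto_derive. lra. field. lra.
    + intros c Hc. unfold F'. split.
      * assert (/(1-c) >= 1 + c). { apply Rle_ge. 
          apply Rmult_le_reg_l with (1-c). lra. rewrite Rinv_r by lra. nra. } lra.
      * assert (/(1-c) <= 2). { apply Rmult_le_reg_l with (1-c). lra. rewrite Rinv_r by lra. nra. } lra.
    + unfold F in H1. cbv beta in H1; repeat rewrite Rminus_0_r in H1; rewrite ln_1 in H1. lra.
  - set (F := fun w => w + w^2/2 + w^3 + ln (1 - w)).
    set (F' := fun w => 1 + w + 3 * w^2 - / (1 - w)).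
    destruct (mvt_bounds F F' 0 t 0 10 ltac:(lra)) as [H1 _].
    + intros c Hc. apply is_derive_Reals. unfold F, F'. auto_derive. lra. field. lra.
    + intros c Hc. unfold F'. split.
      * assert (/(1-c) <= 1 + c + 3*c^2). { 
          apply Rmult_le_reg_l with (1-c). lra. rewrite Rinv_r by lra. nra. } lra.
      * assert (/(1-c) >= 0). { apply Rle_ge, Rlt_le, Rinv_0_lt_compat; lra. } nra.
    + unfold F in H1. cbv beta in H1; repeat rewrite Rminus_0_r in H1; rewrite ln_1 in H1. lra.
Qed.

Definition u (s : R) (k : nat) : R := Rpower (INR (k + 1)) (- s).

Lemma INR_S1_pos k : 0 < INR (k + 1).
Proof. apply lt_0_INR. lia. Qed.

Lemma u_pos s k : 0 < u s k.
Proof. unfold u, Rpower. apply exp_pos. Qed.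

Lemma u_decr s : 0 < s -> Un_decreasing (u s).
Proof.
  intros Hs k. unfold u, Rpower. 
  assert (ln (INR (k+1)) <= ln (INR (S k + 1))).
  { apply ln_le. apply INR_S1_pos. apply le_INR. lia. }
  destruct (Req_dec (ln (INR (k+1))) (ln (INR (S k + 1)))) as [E|E].
  - rewrite E. lra.
  - left. apply exp_increasing. nra.
Qed.

Lemma u_mono_s s1 s2 k : s1 <= s2 -> u s2 k <= u s1 k.
Proof.
  intros H. unfold u, Rpower.
  assert (0 <= ln (INR (k+1))). { rewrite <- ln_1. apply ln_le. lra. 
    replace (k+1)%nat with (S k) by lia. rewrite S_INR. pose proof (pos_INR k). lra. }
  destruct (Req_dec s1 s2) as [->|E]. lra.
  destruct (Req_dec 0 (ln (INR (k+1)))) as [E2|E2].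
  - rewrite <- E2. rewrite !Rmult_0_r. lra.
  - left. apply exp_increasing. nra.
Qed.

Lemma u_cv0 s : 0 < s -> Un_cv (u s) 0.
Proof.
  intros Hs eps He.
  destruct (archimed (exp (- ln eps / s))) as [Ha _].
  set (N := Z.to_nat (up (exp (- ln eps / s)))).
  assert (HN : exp (- ln eps / s) < INR N).
  { unfold N. assert (0 < exp (- ln eps / s)) by apply exp_pos.
    rewrite INR_IZR_INZ, Z2Nat.id. lra. apply le_IZR. lra. }
  exists N. intros n Hn. unfold R_dist. rewrite Rminus_0_r.
  rewrite Rabs_right by (apply Rle_ge, Rlt_le, u_pos).
  unfold u, Rpower. rewrite <- (exp_ln eps) by lra. apply exp_increasing.
  assert (INR N <= INR (n+1)) by (apply le_INR; lia).
  assert (exp (- ln eps / s) < INR (n+1)) by lra.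
  apply ln_increasing in H0; [|apply exp_pos]. rewrite ln_exp in H0.
  unfold Rdiv in H0. 
  assert (- ln eps < s * ln (INR (n+1))).
  { apply Rmult_lt_reg_r with (/s). apply Rinv_0_lt_compat; lra.
    replace (s * ln (INR (n + 1)) * / s) with (ln (INR (n+1))) by (field; lra). lra. }
  lra.
Qed.

Lemma eta_cv s : 0 < s -> Un_cv (fun N => sum_f_R0 (tg_alt (u s)) N) (eta s).
Proof.
  intros Hs. destruct (alternated_series (u s) (u_decr s Hs) (u_cv0 s Hs)) as [l Hl].
  replace (eta s) with l. exact Hl.
  symmetry. unfold eta. apply is_series_unique. apply is_series_Reals. exact Hl.
Qed.

Lemma u0 s : u s 0 = 1.
Proof. unfold u, Rpower. simpl. rewrite ln_1, Rmult_0_r. apply exp_0. Qed.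
Lemma u1 s : u s 1 = Rpower 2 (-s).
Proof. unfold u. f_equal; simpl; try ring. Qed.
Lemma u2 s : u s 2 = Rpower 3 (-s).
Proof. unfold u. f_equal; simpl; try ring. Qed.

Lemma eta_bounds y : 0 < y -> 1 - Rpower 2 (-y) <= eta y <= 1 - Rpower 2 (-y) + Rpower 3 (-y).
Proof.
  intros Hy. pose proof (eta_cv y Hy) as H.
  pose proof (alternated_series_ineq (u y) (eta y) 0 (u_decr y Hy) (u_cv0 y Hy) H) as [H1 _].
  pose proof (alternated_series_ineq (u y) (eta y) 1 (u_decr y Hy) (u_cv0 y Hy) H) as [_ H2].
  simpl in H1, H2. unfold tg_alt in H1, H2. rewrite u0, u1 in H1. rewrite u0, u1, u2 in H2.
  split; lra.
Qed.

Lemma cv_le_const (v : nat -> R) l c : Un_cv v l -> (forall n, v n <= c) -> l <= c.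
Proof.
  intros H Hb. destruct (Rle_dec l c) as [|Hn]; auto. exfalso.
  destruct (H (l - c)) as [N HN]. lra. specialize (HN N (le_n _)). specialize (Hb N).
  unfold R_dist in HN. apply Rabs_lt_between in HN. lra.
Qed.

Lemma cv_ge_const (v : nat -> R) l c : Un_cv v l -> (forall n, c <= v n) -> c <= l.
Proof.
  intros H Hb. destruct (Rle_dec c l) as [|Hn]; auto. exfalso.
  destruct (H (c - l)) as [N HN]. lra. specialize (HN N (le_n _)). specialize (Hb N).
  unfold R_dist in HN. apply Rabs_lt_between in HN. lra.
Qed.

Definition isq (k : nat) : R := / (INR (k + 1))^2.

Lemma isq_pos k : 0 < isq k.
Proof. unfold isq. apply Rinv_0_lt_compat. pose proof (INR_S1_pos k). nra. Qed.

Lemma isq_partial N : sum_f_R0 isq N <= 2 - / INR (N + 1).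
Proof.
  induction N.
  - simpl. unfold isq. simpl. lra.
  - simpl sum_f_R0. 
    assert (isq (S N) <= / INR (N+1) - / INR (S N + 1)).
    { unfold isq. replace (S N + 1)%nat with (S (N+1)) by lia. rewrite S_INR.
      pose proof (INR_S1_pos N). set (x := INR (N+1)) in *.
      apply Rmult_le_reg_l with (x * (x+1)^2). nra.
      field_simplify; try lra. }
    lra.
Qed.

Lemma isq_cv : {l | Un_cv (sum_f_R0 isq) l /\ l <= 2}.
Proof.
  destruct (growing_cv (sum_f_R0 isq)) as [l Hl].
  - intros n. simpl. pose proof (isq_pos (S n)). lra.
  - exists 2. intros x [n ->]. pose proof (isq_partial n).
    pose proof (INR_S1_pos n). assert (0 < / INR (n+1)) by (apply Rinv_0_lt_compat; lra). lra.
  - exists l. split; auto. apply (cv_le_const _ _ _ Hl). intros n. pose proof (isq_partial n).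
    pose proof (INR_S1_pos n). assert (0 < / INR (n+1)) by (apply Rinv_0_lt_compat; lra). lra.
Qed.

Lemma ex_series_isq : ex_series isq.
Proof. destruct isq_cv as [l [Hl _]]. exists l. apply is_series_Reals. exact Hl. Qed.

Lemma Series_isq : Series isq <= 2.
Proof. destruct isq_cv as [l [Hl Hl2]]. rewrite (is_series_unique isq l). auto.
  apply is_series_Reals. exact Hl. Qed.

Lemma ex_series_eta s : 0 < s -> ex_series (fun k => (-1)^k * u s k).
Proof. intros Hs. exists (eta s). apply is_series_Reals. exact (eta_cv s Hs). Qed.

Lemma eta_Series s : eta s = Series (fun k => (-1)^k * u s k).
Proof. reflexivity. Qed.

Lemma exp_diff x y : Rabs (exp x - exp y) <= Rabs (x - y) * exp (Rmax x y).
Proof.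
  destruct (Rle_dec x y).
  - rewrite Rmax_right by lra.
    destruct (mvt_bounds exp exp x y 0 (exp y) r) as [H1 H2].
    + intros c _. apply derivable_pt_lim_exp.
    + intros c Hc. split. apply Rlt_le, exp_pos. destruct (Req_dec c y). subst; lra.
      left. apply exp_increasing. lra.
    + rewrite Rabs_minus_sym, Rabs_right by lra. rewrite Rabs_minus_sym, Rabs_right by lra. lra.
  - rewrite Rmax_left by lra.
    destruct (mvt_bounds exp exp y x 0 (exp x) ltac:(lra)) as [H1 H2].
    + intros c _. apply derivable_pt_lim_exp.
    + intros c Hc. split. apply Rlt_le, exp_pos. destruct (Req_dec c x). subst; lra.
      left. apply exp_increasing. lra.
    + rewrite Rabs_right by lra. rewrite Rabs_right by lra. lra.
Qed.

Lemma ln_INR_ge_ln2 k : (1 <= k)%nat -> ln 2 <= ln (INR (k+1)).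
Proof. intros. apply ln_le. lra. replace 2 with (INR 2) by (simpl; ring). apply le_INR. lia. Qed.

Lemma term_bound a b k : 4 <= a -> 4 <= b ->
  Rabs ((-1)^k * u a k - (-1)^k * u b k) <= (8 * Rabs (a - b) * Rpower 2 (- Rmin a b)) * isq k.
Proof.
  intros Ha Hb. set (m := Rmin a b).
  assert (Hm : 4 <= m) by (apply Rmin_glb; lra).
  assert (Hma : m <= a) by apply Rmin_l. assert (Hmb : m <= b) by apply Rmin_r.
  rewrite <- Rmult_minus_distr_l, Rabs_mult, pow_1_abs, Rmult_1_l.
  pose proof (isq_pos k) as Hq.
  assert (0 < Rpower 2 (-m)) by (unfold Rpower; apply exp_pos).
  destruct k as [|k].
  - rewrite !u0. replace (1-1) with 0 by ring. rewrite Rabs_R0. 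
    apply Rmult_le_pos; [|lra]. apply Rmult_le_pos; [|lra]. pose proof (Rabs_pos (a-b)). lra.
  - set (lam := ln (INR (S k + 1))).
    assert (Hl : ln 2 <= lam) by (apply ln_INR_ge_ln2; lia).
    assert (Hl2 : 0 < ln 2) by (rewrite <- ln_1; apply ln_increasing; lra).
    unfold u, Rpower. fold lam.
    eapply Rle_trans. apply exp_diff.
    replace (- a * lam - - b * lam) with ((b - a) * lam) by ring.
    assert (Rmax (- a * lam) (- b * lam) = - m * lam).
    { unfold m, Rmin, Rmax. destruct (Rle_dec a b); destruct (Rle_dec (-a*lam) (-b*lam)); 
      try reflexivity; try nra. }
    rewrite H0. rewrite Rabs_mult, (Rabs_right lam) by lra. rewrite Rabs_minus_sym.
    assert (E1 : lam * exp (- m * lam) <= exp (- (m - 3) * ln 2) * isq (S k)).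
    { assert (lam <= exp lam) by (pose proof (exp_ineq1_le lam); lra).
      assert (isq (S k) = exp (- 2 * lam)).
      { unfold isq. rewrite <- (exp_ln (INR (S k + 1))) at 1 by apply INR_S1_pos. fold lam.
        replace (-2*lam) with (-(lam+lam)) by ring. rewrite exp_Ropp, exp_plus. f_equal. ring. }
      rewrite H2. rewrite <- exp_plus.
      apply Rle_trans with (exp lam * exp (- m * lam)).
      apply Rmult_le_compat_r. apply Rlt_le, exp_pos. auto.
      rewrite <- exp_plus. destruct (Req_dec (lam + - m * lam) (- (m - 3) * ln 2 + - 2 * lam)) as [E|E].
      rewrite E; lra. left. apply exp_increasing. nra. }
    assert (E2 : exp (- (m - 3) * ln 2) = 8 * exp (- m * ln 2)).
    { replace (- (m-3) * ln 2) with (3 * ln 2 + - m * ln 2) by ring. rewrite exp_plus.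
      f_equal. rewrite <- (exp_ln 8) by lra. f_equal. replace 8 with (2*2*2) by ring.
      rewrite !ln_mult by lra. ring. }
    rewrite E2 in E1. pose proof (Rabs_pos (a-b)). nra.
Qed.

Lemma eta_lip a b : 4 <= a -> 4 <= b ->
  Rabs (eta a - eta b) <= 16 * Rabs (a - b) * Rpower 2 (- Rmin a b).
Proof.
  intros Ha Hb. set (C := 8 * Rabs (a - b) * Rpower 2 (- Rmin a b)).
  assert (HC : 0 <= C). { unfold C. pose proof (Rabs_pos (a-b)).
    assert (0 < Rpower 2 (- Rmin a b)) by (unfold Rpower; apply exp_pos). 
    apply Rmult_le_pos; lra. }
  assert (Hex : ex_series (fun k => C * isq k)).
  { apply (ex_series_ext (fun k => isq k * C)). intros n; apply Rmult_comm. apply ex_series_scal_r, ex_series_isq. }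
  assert (Habs : ex_series (fun k => Rabs ((-1)^k * u a k - (-1)^k * u b k))).
  { apply (@ex_series_le R_AbsRing R_CompleteNormedModule) with (b := fun k => C * isq k); auto.
    intros n. change norm with Rabs. rewrite Rabs_Rabsolu. apply term_bound; auto. }
  rewrite !eta_Series. rewrite <- Series_minus by (apply ex_series_eta; lra).
  eapply Rle_trans. apply Series_Rabs. exact Habs.
  eapply Rle_trans. apply Series_le with (b := fun k => C * isq k); auto.
  intros n. split. apply Rabs_pos. apply term_bound; auto.
  rewrite Series_scal_l. pose proof Series_isq. 
  replace (16 * Rabs (a - b) * Rpower 2 (- Rmin a b)) with (C * 2) by (unfold C; ring).
  apply Rmult_le_compat_l; auto.
Qed.

Lemma cv_le_ev (v : nat -> R) l c N : Un_cv v l -> (forall n, (N <= n)%nat -> v n <= c) -> l <= c.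
Proof.
  intros H Hb. destruct (Rle_dec l c) as [|Hn]; auto. exfalso.
  destruct (H (l - c)) as [M HM]. lra. specialize (HM (max M N) ltac:(lia)). 
  specialize (Hb (max M N) ltac:(lia)).
  unfold R_dist in HM. apply Rabs_lt_between in HM. lra.
Qed.

Lemma cv_ge_ev (v : nat -> R) l c N : Un_cv v l -> (forall n, (N <= n)%nat -> c <= v n) -> c <= l.
Proof.
  intros H Hb. destruct (Rle_dec c l) as [|Hn]; auto. exfalso.
  destruct (H (c - l)) as [M HM]. lra. specialize (HM (max M N) ltac:(lia)).
  specialize (Hb (max M N) ltac:(lia)).
  unfold R_dist in HM. apply Rabs_lt_between in HM. lra.
Qed.

Lemma cv_sub (v : nat -> R) l (phi : nat -> nat) : Un_cv v l -> (forall n, (n <= phi n)%nat) ->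
  Un_cv (fun n => v (phi n)) l.
Proof. intros H Hp eps He. destruct (H eps He) as [N HN]. exists N. intros n Hn.
  apply HN. specialize (Hp n). lia. Qed.

Lemma tail_sum (a q : nat -> R) : (forall k, 0 <= a k <= q k - q (S k)) -> (forall k, 0 <= q k) ->
  exists Sl, Un_cv (sum_f_R0 a) Sl /\ (forall N, sum_f_R0 a N <= Sl <= sum_f_R0 a N + q (S N)).
Proof.
  intros Ha Hq.
  assert (Hpart : forall N d, sum_f_R0 a (N + d) - sum_f_R0 a N <= q (S N) - q (S (N + d))).
  { intros N d. induction d. rewrite Nat.add_0_r. lra.
    replace (N + S d)%nat with (S (N + d)) by lia. simpl. specialize (Ha (S (N+d))). lra. }
  assert (Hmono : forall N d, sum_f_R0 a N <= sum_f_R0 a (N + d)).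
  { intros N d. induction d. rewrite Nat.add_0_r. lra.
    replace (N + S d)%nat with (S (N + d)) by lia. simpl. specialize (Ha (S (N+d))). lra. }
  assert (Hb0 : forall N, sum_f_R0 a N <= q 0%nat).
  { intros N. pose proof (Hpart 0%nat N). simpl in H. specialize (Ha 0%nat). specialize (Hq (S N)). 
    simpl in *. lra. }
  destruct (growing_cv (sum_f_R0 a)) as [Sl HS].
  - intros n. simpl. specialize (Ha (S n)). lra.
  - exists (q 0%nat). intros x [n ->]. apply Hb0.
  - exists Sl. split; auto. intros N. split.
    + apply (cv_ge_ev _ _ _ N HS). intros n Hn. replace n with (N + (n - N))%nat by lia. apply Hmono.
    + apply (cv_le_ev _ _ _ N HS). intros n Hn. replace n with (N + (n - N))%nat by lia.
      pose proof (Hpart N (n - N)%nat). specialize (Hq (S (N + (n - N)))). lra.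
Qed.

Lemma Rpower_1_base y : Rpower 1 y = 1.
Proof. unfold Rpower. rewrite ln_1, Rmult_0_r. apply exp_0. Qed.

Lemma Rpower_m1 x : 0 < x -> Rpower x (-1) = / x.
Proof. intros. replace (-1) with (- (1)) by ring. rewrite Rpower_Ropp, Rpower_1; auto. Qed.

Lemma u_one k : u 1 k = / INR (k + 1).
Proof. unfold u. apply Rpower_m1, INR_S1_pos. Qed.

Definition F (sg x : R) : R := Rpower x sg / sg.

Lemma F_deriv sg c : 0 < sg -> 0 < c -> derivable_pt_lim (F sg) c (Rpower c (- (1 - sg))).
Proof.
  intros Hs Hc. apply is_derive_Reals. unfold F, Rpower.
  auto_derive. lra.
  replace (- (1 - sg) * ln c) with (sg * ln c + - ln c) by ring.
  rewrite exp_plus, exp_Ropp, exp_ln by lra. field. lra.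
Qed.

Lemma F_step sg k : 0 < sg < 1 ->
  u (1 - sg) (S k) <= F sg (INR (k + 2)) - F sg (INR (k + 1)) <= u (1 - sg) k.
Proof.
  intros Hs. pose proof (INR_S1_pos k) as Hk.
  assert (E : INR (k+2) = INR (k+1) + 1). { replace (k+2)%nat with (S (k+1)) by lia. apply S_INR. }
  destruct (mvt_bounds (F sg) (fun c => Rpower c (- (1 - sg))) (INR (k+1)) (INR (k+2))
              (u (1 - sg) (S k)) (u (1 - sg) k)) as [H1 H2].
  - lra.
  - intros c Hc. apply F_deriv; lra.
  - intros c Hc. unfold u. replace (S k + 1)%nat with (k+2)%nat by lia.
    unfold Rpower. 
    assert (ln c <= ln (INR (k+2))) by (apply ln_le; lra).
    assert (ln (INR (k+1)) <= ln c) by (apply ln_le; lra).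
    split.
    + destruct (Req_dec (ln c) (ln (INR (k+2)))) as [e|e]. rewrite e; lra.
      left. apply exp_increasing. nra.
    + destruct (Req_dec (ln c) (ln (INR (k+1)))) as [e|e]. rewrite e; lra.
      left. apply exp_increasing. nra.
  - rewrite E in H1, H2 |- *. replace (INR (k + 1) + 1 - INR (k + 1)) with 1 in * by ring. lra.
Qed.

Definition dd (sg : R) (k : nat) : R :=
  u (1 - sg) k - (F sg (INR (k + 2)) - F sg (INR (k + 1))).

Definition d1 (k : nat) : R := / INR (k + 1) - (ln (INR (k + 2)) - ln (INR (k + 1))).

Lemma dd_bounds sg k : 0 < sg < 1 -> 0 <= dd sg k <= u (1 - sg) k - u (1 - sg) (S k).
Proof. intros Hs. pose proof (F_step sg k Hs). unfold dd. lra. Qed.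

Lemma lnstep k : / INR (k+2) <= ln (INR (k + 2)) - ln (INR (k + 1)) <= / INR (k + 1).
Proof.
  pose proof (INR_S1_pos k) as Hk.
  assert (E : INR (k+2) = INR (k+1) + 1). { replace (k+2)%nat with (S (k+1)) by lia. apply S_INR. }
  rewrite <- ln_div by lra. rewrite E. split.
  - pose proof (ln_ge_1inv ((INR (k + 1) + 1) / INR (k + 1))). 
    replace (1 - / ((INR (k + 1) + 1) / INR (k + 1))) with (/ (INR (k+1) + 1)) in H by (field; lra).
    apply H. apply Rdiv_lt_0_compat; lra.
  - pose proof (ln_le_sub1 ((INR (k + 1) + 1) / INR (k + 1))).
    replace ((INR (k + 1) + 1) / INR (k + 1) - 1) with (/ INR (k+1)) in H by (field; lra).
    apply H. apply Rdiv_lt_0_compat; lra.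
Qed.

Lemma d1_bounds k : 0 <= d1 k <= u 1 k - u 1 (S k).
Proof. pose proof (lnstep k). unfold d1. rewrite !u_one.
  replace (S k + 1)%nat with (k+2)%nat by lia. lra. Qed.

Lemma two_pow_u sg k : 0 < sg < 1 ->
  Rpower 2 sg * u (1 - sg) k = 2 * u (1 - sg) (2 * k + 1).
Proof.
  intros Hs. unfold u.
  replace (INR (2 * k + 1 + 1)) with (2 * INR (k + 1)) by (rewrite !plus_INR, mult_INR; simpl; ring).
  rewrite <- Rpower_mult_distr; [|lra|apply INR_S1_pos].
  replace sg with (1 + - (1 - sg)) at 1 by ring. rewrite Rpower_plus, Rpower_1 by lra. ring.
Qed.

Lemma alt_identity sg M : 0 < sg < 1 ->
  sum_f_R0 (tg_alt (u (1 - sg))) (2 * M + 1) =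
  sum_f_R0 (u (1 - sg)) (2 * M + 1) - Rpower 2 sg * sum_f_R0 (u (1 - sg)) M.
Proof.
  intros Hs. induction M.
  - simpl. unfold tg_alt. simpl. rewrite u0. pose proof (two_pow_u sg 0 Hs). simpl in H.
    rewrite u0 in H. lra.
  - replace (2 * S M + 1)%nat with (S (S (2 * M + 1))) by lia.
    rewrite !tech5. rewrite IHM. unfold tg_alt.
    replace (S (2 * M + 1)) with (2 * (M + 1))%nat by lia.
    idtac.
    rewrite pow_1_even, pow_1_odd.
    pose proof (two_pow_u sg (S M) Hs).
    replace (2 * S M + 1)%nat with (2 * (M + 1) + 1)%nat in H by lia. 
    rewrite Rmult_plus_distr_l. replace (S (2 * (M + 1))) with (2 * (M + 1) + 1)%nat by lia. lra.
Qed.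

Lemma P_identity sg M : 0 < sg < 1 ->
  sum_f_R0 (u (1 - sg)) M = sum_f_R0 (dd sg) M + F sg (INR (M + 2)) - F sg 1.
Proof.
  intros Hs. induction M.
  - simpl. unfold dd. simpl. replace (1 + 1) with (INR 2) by (simpl; ring). ring.
  - simpl sum_f_R0. rewrite IHM. unfold dd.
    replace (S M + 1)%nat with (M + 2)%nat by lia. ring.
Qed.

Lemma F_one sg : 0 < sg -> F sg 1 = / sg.
Proof. intros. unfold F. rewrite Rpower_1_base. field. lra. Qed.

Lemma F_double sg M : 0 < sg < 1 ->
  Rpower 2 sg * F sg (INR (M + 2)) = F sg (INR (2 * M + 3 + 1)).
Proof.
  intros Hs. unfold F.
  replace (INR (2 * M + 3 + 1)) with (2 * INR (M + 2)) by (rewrite !plus_INR, mult_INR; simpl; ring).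
  rewrite <- Rpower_mult_distr; [|lra|]. field. lra. 
  replace (M+2)%nat with ((M+1)+1)%nat by lia. apply INR_S1_pos.
Qed.

Lemma eta_zeta_rel sg : 0 < sg < 1 -> forall Sl, Un_cv (sum_f_R0 (dd sg)) Sl ->
  eta (1 - sg) = (1 - Rpower 2 sg) * (Sl - / sg).
Proof.
  intros Hs Sl HS.
  set (s := 1 - sg).
  assert (Hcv1 : Un_cv (fun M => sum_f_R0 (tg_alt (u s)) (2 * M + 1)) (eta s)).
  { apply cv_sub with (phi := fun M => (2 * M + 1)%nat). apply eta_cv. unfold s; lra. intros; lia. }
  set (e := fun M => F sg (INR (2 * M + 2 + 1)) - F sg (INR (2 * M + 3 + 1))).
  assert (Hexp : forall M, sum_f_R0 (tg_alt (u s)) (2 * M + 1) =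
     sum_f_R0 (dd sg) (2 * M + 1) - Rpower 2 sg * sum_f_R0 (dd sg) M - (1 - Rpower 2 sg) * / sg + e M).
  { intros M. unfold s. rewrite alt_identity by auto. rewrite !P_identity by auto.
    rewrite Rmult_minus_distr_l, Rmult_plus_distr_l, F_double, F_one by lra. unfold e.
    replace (2 * M + 1 + 2)%nat with (2 * M + 2 + 1)%nat by lia. ring. }
  assert (He : Un_cv e 0).
  { intros eps Heps. destruct (u_cv0 s ltac:(unfold s; lra) eps Heps) as [N HN].
    exists N. intros n Hn. unfold R_dist. rewrite Rminus_0_r.
    pose proof (F_step sg (2 * n + 2) Hs).
    replace (2 * n + 2 + 2)%nat with (2 * n + 3 + 1)%nat in H by lia.
    specialize (HN (2 * n + 2)%nat ltac:(lia)). unfold R_dist in HN. rewrite Rminus_0_r in HN.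
    pose proof (u_pos s (S (2 * n + 2))).
    fold s in H. unfold e. rewrite Rabs_left1 by lra. rewrite Rabs_right in HN by (apply Rle_ge, Rlt_le, u_pos). lra. }
  assert (Hcv2 : Un_cv (fun M => sum_f_R0 (dd sg) (2 * M + 1) - Rpower 2 sg * sum_f_R0 (dd sg) M
                 - (1 - Rpower 2 sg) * / sg + e M) (Sl - Rpower 2 sg * Sl - (1 - Rpower 2 sg) * / sg + 0)).
  { apply CV_plus; auto. apply CV_minus. apply CV_minus.
    apply cv_sub with (phi := fun M => (2 * M + 1)%nat). auto. intros; lia.
    apply CV_mult. intros eps Heps. exists 0%nat. intros. unfold R_dist. rewrite Rminus_eq_0, Rabs_R0. lra. auto.
    intros eps Heps. exists 0%nat. intros. unfold R_dist. rewrite Rminus_eq_0, Rabs_R0. lra. }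
  assert (Hcv3 : Un_cv (fun M => sum_f_R0 (tg_alt (u s)) (2 * M + 1)) 
                 (Sl - Rpower 2 sg * Sl - (1 - Rpower 2 sg) * / sg + 0)).
  { intros eps Heps. destruct (Hcv2 eps Heps) as [N HN]. exists N. intros n Hn. rewrite Hexp. auto. }
  rewrite (UL_sequence _ _ _ Hcv1 Hcv3). ring.
Qed.

Lemma zeta_formula sg : 0 < sg < 1 -> forall Sl, Un_cv (sum_f_R0 (dd sg)) Sl ->
  zeta (1 - sg) = Sl - / sg.
Proof.
  intros Hs Sl HS. unfold zeta. rewrite (eta_zeta_rel sg Hs Sl HS).
  replace (1 - (1 - sg)) with sg by ring.
  assert (1 < Rpower 2 sg). { rewrite <- (Rpower_O 2) by lra. apply Rpower_lt; lra. }
  field. lra.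
Qed.

Lemma rp_deriv0 x : 0 < x -> forall eps, 0 < eps -> exists del, 0 < del /\
  forall sg, sg <> 0 -> Rabs sg < del -> Rabs ((Rpower x sg - 1) / sg - ln x) < eps.
Proof.
  intros Hx eps He.
  assert (H : derivable_pt_lim (fun t => exp (t * ln x)) 0 (ln x)).
  { apply is_derive_Reals. auto_derive. auto. rewrite Rmult_0_l, exp_0. ring. }
  destruct (H eps He) as [del Hd]. exists del. split. apply cond_pos.
  intros sg H1 H2. specialize (Hd sg H1 H2). rewrite Rplus_0_l, Rmult_0_l, exp_0 in Hd.
  exact Hd.
Qed.

Lemma exp_le1 x : x <= 0 -> exp x <= 1.
Proof. intros. rewrite <- exp_0. destruct (Req_dec x 0) as [->|E]. lra. left. apply exp_increasing. lra. Qed.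

Lemma dd_cont k : forall eps, 0 < eps -> exists del, 0 < del /\
  forall sg, 0 < sg < del -> Rabs (dd sg k - d1 k) < eps.
Proof.
  intros eps He.
  set (lam := ln (INR (k + 1))).
  assert (Hlam : 0 <= lam). { unfold lam. rewrite <- ln_1. apply ln_le. lra.
    replace (k+1)%nat with (S k) by lia. rewrite S_INR. pose proof (pos_INR k). lra. }
  destruct (rp_deriv0 (INR (k+2))) with (eps := eps/3) as [d2 [Hd2 H2]]. 
  { replace (k+2)%nat with ((k+1)+1)%nat by lia. apply INR_S1_pos. } lra.
  destruct (rp_deriv0 (INR (k+1))) with (eps := eps/3) as [d3 [Hd3 H3]]. apply INR_S1_pos. lra.
  set (d0 := eps / 3 / (lam + 1)).
  assert (Hd0 : 0 < d0). { unfold d0. apply Rdiv_lt_0_compat; lra. }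
  exists (Rmin (Rmin d2 d3) (Rmin d0 1)). split. 
  { repeat apply Rmin_glb_lt; lra. }
  intros sg Hs.
  assert (Hs2 : sg < d2) by (eapply Rlt_le_trans; [apply Hs| repeat (eapply Rle_trans; [apply Rmin_l|]); lra]).
  assert (Hs3 : sg < d3).
  { eapply Rlt_le_trans; [apply Hs|]. eapply Rle_trans; [apply Rmin_l|]. apply Rmin_r. }
  assert (Hs0 : sg < d0).
  { eapply Rlt_le_trans; [apply Hs|]. eapply Rle_trans; [apply Rmin_r|]. apply Rmin_l. }
  assert (Hs1 : sg < 1).
  { eapply Rlt_le_trans; [apply Hs|]. eapply Rle_trans; [apply Rmin_r|]. apply Rmin_r. }
  assert (Hsg : sg <> 0) by lra. assert (Has : Rabs sg = sg) by (apply Rabs_right; lra).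
  specialize (H2 sg Hsg ltac:(lra)). specialize (H3 sg Hsg ltac:(lra)).
  assert (Hu : Rabs (u (1 - sg) k - / INR (k + 1)) <= sg * lam).
  { rewrite <- u_one. unfold u, Rpower. fold lam. eapply Rle_trans. apply exp_diff.
    match goal with |- Rabs (?x - ?y) * exp (Rmax ?a ?b) <= _ =>
      replace (x - y) with (sg * lam) by ring;
      assert (exp (Rmax a b) <= 1) by
      (apply exp_le1; unfold Rmax; destruct Rle_dec; nra) end.
    rewrite Rabs_right by nra.
    assert (0 <= sg * lam) by nra. nra. }
  assert (Hu2 : sg * lam < eps / 3).
  { assert (sg * (lam + 1) < eps/3). 
    { apply Rmult_lt_reg_r with (/ (lam + 1)). apply Rinv_0_lt_compat; lra.
      rewrite Rmult_assoc, Rinv_r, Rmult_1_r by lra. exact Hs0. }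
    nra. }
  unfold dd, d1, F.
  replace (u (1 - sg) k - (Rpower (INR (k + 2)) sg / sg - Rpower (INR (k + 1)) sg / sg) -
      (/ INR (k + 1) - (ln (INR (k + 2)) - ln (INR (k + 1)))))
   with ((u (1 - sg) k - / INR (k + 1)) - ((Rpower (INR (k + 2)) sg - 1) / sg - ln (INR (k + 2)))
        + ((Rpower (INR (k + 1)) sg - 1) / sg - ln (INR (k + 1)))) by (pose proof (INR_S1_pos k); field; lra).
  apply Rabs_lt_between in H2. apply Rabs_lt_between in H3. apply Rabs_le_between in Hu.
  apply Rabs_lt_between. lra.
Qed.

Lemma dd_cont_sum N : forall eps, 0 < eps -> exists del, 0 < del /\
  forall sg, 0 < sg < del -> Rabs (sum_f_R0 (dd sg) N - sum_f_R0 d1 N) < eps.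
Proof.
  induction N; intros eps He.
  - destruct (dd_cont 0 eps He) as [del [Hd H]]. exists del. split; auto. intros. simpl. auto.
  - destruct (IHN (eps/2) ltac:(lra)) as [d1' [Hd1 H1]].
    destruct (dd_cont (S N) (eps/2) ltac:(lra)) as [d2 [Hd2 H2]].
    exists (Rmin d1' d2). split. apply Rmin_glb_lt; lra. intros sg Hs.
    assert (sg < d1') by (eapply Rlt_le_trans; [apply Hs| apply Rmin_l]).
    assert (sg < d2) by (eapply Rlt_le_trans; [apply Hs| apply Rmin_r]).
    simpl. specialize (H1 sg ltac:(lra)). specialize (H2 sg ltac:(lra)).
    replace (sum_f_R0 (dd sg) N + dd sg (S N) - (sum_f_R0 d1 N + d1 (S N))) with
      ((sum_f_R0 (dd sg) N - sum_f_R0 d1 N) + (dd sg (S N) - d1 (S N))) by ring.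
    eapply Rle_lt_trans. apply Rabs_triang. lra.
Qed.

Lemma S1_exists : exists S1, Un_cv (sum_f_R0 d1) S1 /\
  (forall N, sum_f_R0 d1 N <= S1 <= sum_f_R0 d1 N + u 1 (S N)).
Proof. apply tail_sum. apply d1_bounds. intros; apply Rlt_le, u_pos. Qed.

Lemma Sd_exists sg : 0 < sg < 1 -> exists Sl, Un_cv (sum_f_R0 (dd sg)) Sl /\
  (forall N, sum_f_R0 (dd sg) N <= Sl <= sum_f_R0 (dd sg) N + u (1 - sg) (S N)).
Proof. intros. apply tail_sum. intros; apply dd_bounds; auto. intros; apply Rlt_le, u_pos. Qed.

Lemma harm_d1 m : sum_f_R0 d1 m = sum_f_R0 (fun k => / INR (k + 1)) m - ln (INR (m + 2)).
Proof.
  induction m.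
  - simpl. unfold d1. simpl. rewrite ln_1. ring.
  - rewrite !tech5, IHm. unfold d1. replace (S m + 1)%nat with (m + 2)%nat by lia. ring.
Qed.

Lemma gamma_eq S1 : Un_cv (sum_f_R0 d1) S1 -> euler_gamma = S1.
Proof.
  intros HS. unfold euler_gamma.
  assert (Hc : Un_cv (fun m => sum_f_R0 (fun k => / INR (k + 1)) m - ln (INR (m + 1))) S1).
  { intros eps He. destruct (HS (eps/2) ltac:(lra)) as [N1 H1].
    destruct (u_cv0 1 ltac:(lra) (eps/2) ltac:(lra)) as [N2 H2].
    exists (max N1 N2). intros n Hn. specialize (H1 n ltac:(lia)). specialize (H2 n ltac:(lia)).
    unfold R_dist in *. rewrite Rminus_0_r, Rabs_right in H2 by (apply Rle_ge, Rlt_le, u_pos).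
    rewrite u_one in H2. pose proof (lnstep n). rewrite harm_d1 in H1.
    replace (sum_f_R0 (fun k : nat => / INR (k + 1)) n - ln (INR (n + 1)) - S1) with
      ((sum_f_R0 (fun k : nat => / INR (k + 1)) n - ln (INR (n + 2)) - S1) + 
       (ln (INR (n + 2)) - ln (INR (n + 1)))) by ring.
    eapply Rle_lt_trans. apply Rabs_triang. rewrite (Rabs_right (ln (INR (n + 2)) - ln (INR (n + 1)))). pose proof (Rplus_lt_compat _ _ _ _ H1 (Rle_lt_trans _ _ _ (proj2 H) H2)). eapply Rlt_le_trans; [exact H0| right; field]. assert (0 < / INR (n+2)) by (apply Rinv_0_lt_compat; apply lt_0_INR; lia). lra. }
  rewrite (is_lim_seq_unique _ S1). reflexivity.
  eapply is_lim_seq_ext; [|apply is_lim_seq_Reals; exact Hc].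
  intros n. simpl. rewrite sum_n_Reals. reflexivity.
Qed.

Lemma zeta_near1 : forall eps, 0 < eps -> exists del, 0 < del /\
  forall sg, 0 < sg < del -> Rabs (zeta (1 - sg) + / sg - euler_gamma) < eps.
Proof.
  intros eps He.
  destruct S1_exists as [S1 [HS1 HS1b]]. rewrite (gamma_eq S1 HS1).
  destruct (u_cv0 (1/2) ltac:(lra) (eps/3) ltac:(lra)) as [N HN].
  specialize (HN (S N) ltac:(lia)). unfold R_dist in HN.
  rewrite Rminus_0_r, Rabs_right in HN by (apply Rle_ge, Rlt_le, u_pos).
  destruct (dd_cont_sum N (eps/3) ltac:(lra)) as [del [Hd Hc]].
  exists (Rmin del (1/2)). split. apply Rmin_glb_lt; lra. intros sg Hs.
  assert (sg < del) by (eapply Rlt_le_trans; [apply Hs| apply Rmin_l]).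
  assert (sg < 1/2) by (eapply Rlt_le_trans; [apply Hs| apply Rmin_r]).
  destruct (Sd_exists sg ltac:(lra)) as [Sl [HSl HSlb]].
  rewrite (zeta_formula sg ltac:(lra) Sl HSl).
  specialize (Hc sg ltac:(lra)). specialize (HSlb N). specialize (HS1b N).
  pose proof (u_mono_s (1/2) (1 - sg) (S N) ltac:(lra)).
  pose proof (u_mono_s (1/2) 1 (S N) ltac:(lra)).
  replace (Sl - / sg + / sg - S1) with ((Sl - sum_f_R0 (dd sg) N) + (sum_f_R0 (dd sg) N - sum_f_R0 d1 N) + (sum_f_R0 d1 N - S1)) by (field; lra).
  apply Rabs_lt_between in Hc. apply Rabs_lt_between. lra.
Qed.

Lemma zeta_bound sg : 0 < sg < 1 -> 0 <= zeta (1 - sg) + / sg <= 1.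
Proof.
  intros Hs. destruct (Sd_exists sg Hs) as [Sl [HSl HSlb]].
  rewrite (zeta_formula sg Hs Sl HSl). 
  assert (Hq : 0 <= Sl <= u (1 - sg) 0).
  { destruct (tail_sum (dd sg) (u (1 - sg))) as [S' [HS' HS'b]].
    intros; apply dd_bounds; auto. intros; apply Rlt_le, u_pos.
    rewrite (UL_sequence _ _ _ HSl HS').
    specialize (HS'b 0%nat). simpl in HS'b. pose proof (dd_bounds sg 0 Hs). lra. }
  rewrite u0 in Hq. replace (Sl - / sg + / sg) with Sl by (field; lra). lra.
Qed.

Definition E2 (y : R) := Rpower 2 (- y).
Definition rr (y : R) := exp (- y * (ln 3 - ln 2)).
Definition tt (y : R) := 1 - eta y.

Lemma ln2_pos : 0 < ln 2.
Proof. rewrite <- ln_1. apply ln_increasing; lra. Qed.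
Lemma ln32_pos : 0 < ln 3 - ln 2.
Proof. assert (ln 2 < ln 3) by (apply ln_increasing; lra). lra. Qed.

Lemma exp_mono x y : x <= y -> exp x <= exp y.
Proof. intros. destruct (Req_dec x y) as [->|E]. lra. left. apply exp_increasing. lra. Qed.

Lemma E2_pos y : 0 < E2 y.
Proof. unfold E2, Rpower. apply exp_pos. Qed.

Lemma E2_small y : 4 <= y -> E2 y <= 1/16.
Proof.
  intros Hy. unfold E2, Rpower. pose proof ln2_pos.
  apply Rle_trans with (exp (- 4 * ln 2)). apply exp_mono. nra.
  replace (- 4 * ln 2) with (- (ln 2 + ln 2 + ln 2 + ln 2)) by ring.
  rewrite exp_Ropp, !exp_plus, exp_ln by lra. lra.
Qed.

Lemma rr_small y : 2 <= y -> rr y <= 1/2.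
Proof.
  intros Hy. unfold rr. pose proof ln32_pos.
  apply Rle_trans with (exp (- 2 * (ln 3 - ln 2))). apply exp_mono. nra.
  replace (- 2 * (ln 3 - ln 2)) with ((ln 2 + ln 2) + - (ln 3 + ln 3)) by ring.
  rewrite exp_plus, exp_Ropp, !exp_plus, !exp_ln by lra. lra.
Qed.

Lemma rr_pos y : 0 < rr y.
Proof. apply exp_pos. Qed.

Lemma E3_eq y : Rpower 3 (- y) = rr y * E2 y.
Proof. unfold rr, E2, Rpower. rewrite <- exp_plus. f_equal. ring. Qed.

Lemma tt_bounds y : 4 <= y -> E2 y * (1 - rr y) <= tt y <= E2 y.
Proof.
  intros Hy. pose proof (eta_bounds y ltac:(lra)). rewrite E3_eq in H. fold (E2 y) in H.
  unfold tt. pose proof (E2_pos y). pose proof (rr_pos y). nra.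
Qed.

Lemma tt_basic y : 4 <= y -> 0 < tt y <= 1/16 /\ E2 y / 2 <= tt y.
Proof.
  intros Hy. pose proof (tt_bounds y Hy). pose proof (E2_small y Hy). pose proof (E2_pos y).
  pose proof (rr_small y ltac:(lra)). split. split; nra. nra.
Qed.

Definition LL (y : R) := - ln (1 - tt y).

Lemma LL_bounds y : 4 <= y -> tt y + tt y ^ 2 / 2 <= LL y <= tt y + tt y ^ 2 / 2 + tt y ^ 3.
Proof. intros Hy. destruct (tt_basic y Hy) as [[H1 H2] _]. apply mln1m_bounds. lra. Qed.

Lemma g_formula y : 4 <= y -> g y = - ln (LL y).
Proof.
  intros Hy. destruct (tt_basic y Hy) as [[H1 H2] _]. pose proof (LL_bounds y Hy) as HL.
  unfold g. replace (eta y) with (1 - tt y) by (unfold tt; ring).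
  assert (ln (1 - tt y) < 0). { rewrite <- ln_1. apply ln_increasing; lra. }
  rewrite (Rabs_left (ln (1 - tt y))) by lra. fold (LL y).
  assert (ln (LL y) < 0). { rewrite <- ln_1. apply ln_increasing. nra. nra. }
  rewrite Rabs_left by lra. reflexivity.
Qed.

Definition DD (y : R) := zeta (1 - tt y) + / tt y.

Lemma DD_bounds y : 4 <= y -> 0 <= DD y <= 1.
Proof. intros Hy. destruct (tt_basic y Hy) as [[H1 H2] _]. apply zeta_bound. lra. Qed.

Lemma h_formula y : 4 <= y -> h y = - ln (tt y) + ln (1 - tt y * DD y).
Proof.
  intros Hy. destruct (tt_basic y Hy) as [[H1 H2] _]. pose proof (DD_bounds y Hy).
  unfold h. replace (eta y) with (1 - tt y) by (unfold tt; ring).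
  replace (zeta (1 - tt y)) with (- (/ tt y * (1 - tt y * DD y))) by (unfold DD; field; lra).
  assert (0 < / tt y) by (apply Rinv_0_lt_compat; lra).
  assert (0 < 1 - tt y * DD y) by nra.
  rewrite Rabs_Ropp, Rabs_right by nra. rewrite ln_mult, ln_Rinv by lra. ring.
Qed.

Lemma base_bound y : 4 <= y ->
  Rabs (Rpower 2 y * (g y - h y) - (euler_gamma - 1/2)) <=
  rr y + Rabs (DD y - euler_gamma) + 2 * tt y.
Proof.
  intros Hy. destruct (tt_basic y Hy) as [[H1 H2] H3]. pose proof (DD_bounds y Hy) as HD.
  pose proof (LL_bounds y Hy) as HL. pose proof (tt_bounds y Hy) as HT.
  pose proof (E2_pos y) as HE. pose proof (rr_small y ltac:(lra)). pose proof (rr_pos y).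
  rewrite g_formula, h_formula by auto.
  set (t := tt y) in *. set (D := DD y) in *. set (L := LL y) in *.
  set (v1 := L / t - 1).
  assert (Hv1 : t / 2 <= v1 <= t / 2 + t ^ 2).
  { assert (Hit : t * / t = 1) by (field; lra).
    assert (0 < / t) by (apply Rinv_0_lt_compat; lra).
    unfold v1. unfold Rdiv at 1. split; nra. }
  assert (EL : ln L = ln t + ln (1 + v1)).
  { rewrite <- ln_mult by (try lra; unfold v1; nra). f_equal. unfold v1. field. lra. }
  pose proof (ln1p_le v1 ltac:(nra)). pose proof (ln1p_ge v1 ltac:(nra)).
  pose proof (ln1p_le (- (t * D)) ltac:(nra)). pose proof (ln1p_ge (- (t * D)) ltac:(nra)).
  replace (1 + - (t * D)) with (1 - t * D) in * by ring.
  set (err := - ln L - (- ln t + ln (1 - t * D)) - t * (D - 1/2)).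
  assert (Herr : Rabs err <= 2 * t ^ 2).
  { assert (v1 ^ 2 <= t ^ 2) by nra. assert ((- (t * D)) ^ 2 <= t ^ 2) by (replace ((- (t*D))^2) with (t^2 * (D*D)) by ring; assert (D*D <= 1) by nra; assert (0 <= t^2) by nra; nra).
    unfold err. rewrite EL. apply Rabs_le. split; lra. }
  assert (Hp2 : Rpower 2 y = / E2 y).
  { unfold E2. rewrite Rpower_Ropp. field. unfold Rpower. apply Rgt_not_eq, exp_pos. }
  rewrite Hp2.
  replace (/ E2 y * (- ln L - (- ln t + ln (1 - t * D))) - (euler_gamma - 1 / 2))
    with ((t / E2 y - 1) * (D - 1/2) + (D - euler_gamma) + err / E2 y) by (unfold err; field; lra).
  assert (Hw : Rabs (t / E2 y - 1) <= rr y).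
  { apply Rabs_le. split.
    - apply Rle_trans with ((E2 y * (1 - rr y)) / E2 y - 1). right. field. lra.
      apply Rplus_le_compat_r. unfold Rdiv. apply Rmult_le_compat_r. 
      apply Rlt_le, Rinv_0_lt_compat; lra. lra.
    - apply Rle_trans with (E2 y / E2 y - 1). 
      apply Rplus_le_compat_r. unfold Rdiv. apply Rmult_le_compat_r. 
      apply Rlt_le, Rinv_0_lt_compat; lra. lra. 
      replace (E2 y / E2 y) with 1 by (field; lra). lra. }
  assert (He2 : Rabs (err / E2 y) <= 2 * t).
  { unfold Rdiv. rewrite Rabs_mult, Rabs_Rinv by lra. rewrite (Rabs_right (E2 y)) by lra.
    apply Rmult_le_reg_r with (E2 y). lra. rewrite Rmult_assoc, Rinv_l, Rmult_1_r by lra.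
    nra. }
  assert (HD2 : Rabs (D - 1/2) <= 1). { apply Rabs_le. lra. }
  eapply Rle_trans. apply Rabs_triang. eapply Rle_trans. apply Rplus_le_compat_r. apply Rabs_triang.
  rewrite Rabs_mult. 
  assert (Rabs (t / E2 y - 1) * Rabs (D - 1 / 2) <= rr y).
  { pose proof (Rabs_pos (t / E2 y - 1)). pose proof (Rabs_pos (D - 1/2)). nra. }
  lra.
Qed.

Lemma exp_neg_small c : 0 < c -> forall eps, 0 < eps -> exists M, forall y, M < y -> exp (- y * c) < eps.
Proof.
  intros Hc eps He. exists (- ln eps / c). intros y Hy.
  rewrite <- (exp_ln eps) by lra. apply exp_increasing.
  assert (- ln eps < y * c).
  { apply Rmult_lt_reg_r with (/ c). apply Rinv_0_lt_compat; lra.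
    replace (y * c * / c) with y by (field; lra). exact Hy. }
  lra.
Qed.

Lemma E2_small_ev eps : 0 < eps -> exists M, forall y, M < y -> E2 y < eps.
Proof. intros. unfold E2, Rpower. apply exp_neg_small; auto. apply ln2_pos. Qed.

Lemma rr_small_ev eps : 0 < eps -> exists M, forall y, M < y -> rr y < eps.
Proof. intros. unfold rr. apply exp_neg_small; auto. apply ln32_pos. Qed.

Lemma base_lim : is_lim (fun y => Rpower 2 y * (g y - h y)) p_infty (euler_gamma - 1/2).
Proof.
  apply is_lim_spec. intros [eps He]. simpl.
  destruct (zeta_near1 (eps/3) ltac:(lra)) as [del [Hd Hz]].
  destruct (E2_small_ev (Rmin del (eps/6)) ltac:(apply Rmin_glb_lt; lra)) as [M1 H1].
  destruct (rr_small_ev (eps/3) ltac:(lra)) as [M2 H2].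
  exists (Rmax 4 (Rmax M1 M2)). intros y Hy.
  assert (4 <= y) by (pose proof (Rmax_l 4 (Rmax M1 M2)); lra).
  assert (M1 < y) by (pose proof (Rmax_r 4 (Rmax M1 M2)); pose proof (Rmax_l M1 M2); lra).
  assert (M2 < y) by (pose proof (Rmax_r 4 (Rmax M1 M2)); pose proof (Rmax_r M1 M2); lra).
  specialize (H1 y ltac:(lra)). specialize (H2 y ltac:(lra)).
  pose proof (Rmin_l del (eps/6)). pose proof (Rmin_r del (eps/6)).
  destruct (tt_basic y ltac:(lra)) as [[T1 T2] T3]. pose proof (tt_bounds y ltac:(lra)).
  specialize (Hz (tt y) ltac:(lra)).
  eapply Rle_lt_trans. apply base_bound. auto. unfold DD. lra.
Qed.

Lemma g_lin y : 4 <= y -> Rabs (g y - y * ln 2) <= 2 * (rr y + tt y).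
Proof.
  intros Hy. rewrite g_formula by auto.
  destruct (tt_basic y Hy) as [[T1 T2] T3]. pose proof (tt_bounds y Hy) as HT.
  pose proof (LL_bounds y Hy) as HL. pose proof (E2_pos y). pose proof (rr_pos y).
  pose proof (rr_small y ltac:(lra)).
  assert (Hy2 : y * ln 2 = - ln (E2 y)). { unfold E2. rewrite ln_Rpower. ring. }
  rewrite Hy2.
  set (t := tt y) in *. set (L := LL y) in *.
  assert (Hit : E2 y * / E2 y = 1) by (field; lra).
  assert (0 < / E2 y) by (apply Rinv_0_lt_compat; lra).
  assert (Hz1 : 1 - rr y <= L / E2 y).
  { unfold Rdiv. apply Rle_trans with (t * / E2 y). nra. nra. }
  assert (Hz2 : L / E2 y <= 1 + t).
  { unfold Rdiv. assert (L <= t * (1 + t)) by nra. 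
    apply Rle_trans with (t * (1 + t) * / E2 y). nra. nra. }
  replace (- ln L - - ln (E2 y)) with (- (ln (L / E2 y) - ln 1)) by 
    (rewrite ln_1, ln_div by nra; ring).
  rewrite Rabs_Ropp. eapply Rle_trans. apply (ln_diff_bound _ _ (1/2)); lra.
  apply Rle_trans with (Rabs (L / E2 y - 1) * 2). right. field.
  assert (Rabs (L / E2 y - 1) <= rr y + t) by (apply Rabs_le; split; lra). lra.
Qed.

Lemma g_lin_lim : is_lim (fun y => g y - y * ln 2) p_infty 0.
Proof.
  apply is_lim_spec. intros [eps He]. simpl.
  destruct (E2_small_ev (eps/4) ltac:(lra)) as [M1 H1].
  destruct (rr_small_ev (eps/4) ltac:(lra)) as [M2 H2].
  exists (Rmax 4 (Rmax M1 M2)). intros y Hy.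
  assert (4 <= y) by (pose proof (Rmax_l 4 (Rmax M1 M2)); lra).
  assert (M1 < y) by (pose proof (Rmax_r 4 (Rmax M1 M2)); pose proof (Rmax_l M1 M2); lra).
  assert (M2 < y) by (pose proof (Rmax_r 4 (Rmax M1 M2)); pose proof (Rmax_r M1 M2); lra).
  specialize (H1 y ltac:(lra)). specialize (H2 y ltac:(lra)).
  pose proof (tt_bounds y ltac:(lra)). pose proof (g_lin y ltac:(lra)).
  rewrite Rminus_0_r. lra.
Qed.

Lemma E2_shift m : E2 m = 2 * E2 (m + 1).
Proof. unfold E2, Rpower. replace (- m * ln 2) with (ln 2 + - (m + 1) * ln 2) by ring.
  rewrite exp_plus, exp_ln by lra. reflexivity. Qed.

Lemma E2_mono a b : a <= b -> E2 b <= E2 a.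
Proof. intros. unfold E2, Rpower. apply exp_mono. pose proof ln2_pos. nra. Qed.

Lemma g_lip a b : 5 <= a -> 5 <= b -> Rabs (a - b) <= 1 -> Rabs (g a - g b) <= 70 * Rabs (a - b).
Proof.
  intros Ha Hb Hab. rewrite !g_formula by lra.
  set (m := Rmin a b).
  assert (Hm1 : m <= a) by apply Rmin_l. assert (Hm2 : m <= b) by apply Rmin_r.
  assert (Hm3 : a <= m + 1 /\ b <= m + 1).
  { apply Rabs_le_between in Hab. unfold m, Rmin. destruct Rle_dec; lra. }
  destruct (tt_basic a ltac:(lra)) as [[Ta1 Ta2] Ta3]. destruct (tt_basic b ltac:(lra)) as [[Tb1 Tb2] Tb3].
  pose proof (LL_bounds a ltac:(lra)). pose proof (LL_bounds b ltac:(lra)).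
  pose proof (E2_mono a (m+1) ltac:(lra)). pose proof (E2_mono b (m+1) ltac:(lra)).
  pose proof (E2_pos (m+1)).
  assert (HL : Rabs (LL a - LL b) <= Rabs (eta a - eta b) * (16/15)).
  { unfold LL, tt. replace (1 - (1 - eta a)) with (eta a) by ring. replace (1 - (1 - eta b)) with (eta b) by ring.
    replace (- ln (eta a) - - ln (eta b)) with (ln (eta b) - ln (eta a)) by ring.
    eapply Rle_trans. apply (ln_diff_bound _ _ (15/16)). lra. unfold tt in *; lra. unfold tt in *; lra.
    rewrite Rabs_minus_sym. right. field. }
  pose proof (eta_lip a b ltac:(lra) ltac:(lra)) as He. fold m in He. fold (E2 m) in He.
  rewrite E2_shift in He.
  replace (- ln (LL a) - - ln (LL b)) with (ln (LL b) - ln (LL a)) by ring.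
  eapply Rle_trans. apply (ln_diff_bound _ _ (E2 (m + 1) / 2)). lra. nra. nra.
  rewrite Rabs_minus_sym.
  apply Rle_trans with (Rabs (eta a - eta b) * (16/15) / (E2 (m + 1) / 2)).
  unfold Rdiv. apply Rmult_le_compat_r. apply Rlt_le, Rinv_0_lt_compat. lra. lra.
  apply Rle_trans with (16 * Rabs (a - b) * (2 * E2 (m + 1)) * (16 / 15) / (E2 (m + 1) / 2)).
  unfold Rdiv. apply Rmult_le_compat_r. apply Rlt_le, Rinv_0_lt_compat. lra.
  apply Rmult_le_compat_r. lra. auto.
  replace (16 * Rabs (a - b) * (2 * E2 (m + 1)) * (16 / 15) / (E2 (m + 1) / 2))
    with (1024 / 15 * Rabs (a - b)) by (field; lra).
  pose proof (Rabs_pos (a - b)). lra.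
Qed.

Lemma L_comp f u l : is_lim f p_infty l -> is_lim u p_infty p_infty ->
  is_lim (fun x => f (u x)) p_infty l.
Proof. intros Hf Hu. eapply is_lim_comp; eauto. exists 0. intros. discriminate. Qed.

Lemma L_mult f g0 a b : is_lim f p_infty (Finite a) -> is_lim g0 p_infty (Finite b) ->
  is_lim (fun x => f x * g0 x) p_infty (Finite (a * b)).
Proof. intros. apply (is_lim_mult f g0 p_infty a b); auto. simpl. auto. Qed.

Lemma L_plus f g0 a b : is_lim f p_infty (Finite a) -> is_lim g0 p_infty (Finite b) ->
  is_lim (fun x => f x + g0 x) p_infty (Finite (a + b)).
Proof. intros. apply is_lim_plus'; auto. Qed.

Lemma L_ext f g0 l : (exists M, forall x, M < x -> f x = g0 x) -> is_lim f p_infty l -> is_lim g0 p_infty l.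
Proof. intros H Hf. eapply is_lim_ext_loc; [|exact Hf]. exact H. Qed.

Lemma L_squeeze0 f b : (exists M, forall x, M < x -> Rabs (f x) <= b x) -> is_lim b p_infty 0 ->
  is_lim f p_infty 0.
Proof.
  intros [M0 HM] Hb. apply is_lim_spec. apply is_lim_spec in Hb. intros eps.
  destruct (Hb eps) as [M1 H1]. exists (Rmax M0 M1). intros x Hx.
  pose proof (Rmax_l M0 M1). pose proof (Rmax_r M0 M1).
  specialize (H1 x ltac:(lra)). specialize (HM x ltac:(lra)). rewrite Rminus_0_r in *.
  pose proof (Rle_abs (b x)). lra.
Qed.

Lemma L_inf_lin f c : 0 < c -> is_lim f p_infty 0 -> is_lim (fun x => f x + c * x) p_infty p_infty.
Proof.
  intros Hc Hf. apply is_lim_spec. apply is_lim_spec in Hf. intros A.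
  destruct (Hf (mkposreal 1 Rlt_0_1)) as [M1 H1]. exists (Rmax M1 ((A + 1) / c)). intros x Hx.
  pose proof (Rmax_l M1 ((A + 1) / c)). pose proof (Rmax_r M1 ((A + 1) / c)).
  specialize (H1 x ltac:(lra)). simpl in H1. rewrite Rminus_0_r in H1. apply Rabs_lt_between in H1.
  assert (A + 1 < c * x).
  { apply Rmult_lt_reg_r with (/ c). apply Rinv_0_lt_compat; lra.
    replace (c * x * / c) with x by (field; lra). unfold Rdiv in *. lra. }
  lra.
Qed.

Lemma L_inf_minus f d : is_lim f p_infty p_infty -> is_lim d p_infty 0 ->
  is_lim (fun x => f x - d x) p_infty p_infty.
Proof.
  intros Hf Hd. apply is_lim_spec. apply is_lim_spec in Hf. apply is_lim_spec in Hd. intros A.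
  destruct (Hf (A + 1)) as [M1 H1]. destruct (Hd (mkposreal 1 Rlt_0_1)) as [M2 H2].
  exists (Rmax M1 M2). intros x Hx. pose proof (Rmax_l M1 M2). pose proof (Rmax_r M1 M2).
  specialize (H1 x ltac:(lra)). specialize (H2 x ltac:(lra)). simpl in H2.
  rewrite Rminus_0_r in H2. apply Rabs_lt_between in H2. lra.
Qed.

Lemma L_E2 : is_lim E2 p_infty 0.
Proof.
  apply is_lim_spec. intros [eps He]. simpl. destruct (E2_small_ev eps He) as [M HM].
  exists M. intros y Hy. rewrite Rminus_0_r, Rabs_right. auto. apply Rle_ge, Rlt_le, E2_pos.
Qed.

Lemma rp2_near0 z : Rabs z <= 1 -> Rabs (Rpower 2 z - 1) <= 2 * Rabs z.
Proof.
  intros Hz. unfold Rpower. rewrite <- exp_0. eapply Rle_trans. apply exp_diff.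
  rewrite Rminus_0_r, Rabs_mult, (Rabs_right (ln 2)) by (apply Rle_ge, Rlt_le, ln2_pos).
  assert (ln 2 < 1). { rewrite <- ln_exp. apply ln_increasing. lra. pose proof (exp_ineq1 1). lra. }
  assert (exp (Rmax (z * ln 2) 0) <= 2).
  { apply Rle_trans with (exp (ln 2)); [|rewrite exp_ln by lra; lra]. apply exp_mono. apply Rabs_le_between in Hz.
    pose proof ln2_pos. unfold Rmax. destruct Rle_dec; nra. }
  pose proof (Rabs_pos z). pose proof ln2_pos. pose proof (exp_pos (Rmax (z * ln 2) 0)). assert (Rabs z * ln 2 <= Rabs z) by nra. assert (0 <= Rabs z * ln 2) by nra. nra.
Qed.

Lemma L_rp2_1 d : is_lim d p_infty 0 -> is_lim (fun x => Rpower 2 (d x)) p_infty 1.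
Proof.
  intros Hd. apply is_lim_spec. apply is_lim_spec in Hd. intros [eps He]. simpl.
  destruct (Hd (mkposreal (Rmin 1 (eps/4)) ltac:(apply Rmin_glb_lt; lra))) as [M HM].
  exists M. intros x Hx. specialize (HM x Hx). simpl in HM. rewrite Rminus_0_r in HM.
  pose proof (Rmin_l 1 (eps/4)). pose proof (Rmin_r 1 (eps/4)).
  eapply Rle_lt_trans. apply rp2_near0. lra. lra.
Qed.

Definition GG k x := Nat.iter k g x.
Definition HH k x := Nat.iter k h x.

Lemma I2 k : is_lim (fun x => GG k x - ln 2 ^ k * x) p_infty 0 /\ is_lim (GG k) p_infty p_infty.
Proof.
  assert (Hc : forall k, 0 < ln 2 ^ k) by (intros; apply pow_lt, ln2_pos).
  assert (I1 : forall k, is_lim (fun x => GG k x - ln 2 ^ k * x) p_infty 0 -> is_lim (GG k) p_infty p_infty).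
  { intros j Hj. eapply L_ext; [|apply (L_inf_lin _ (ln 2 ^ j) (Hc j) Hj)].
    exists 0. intros. ring. }
  induction k.
  - assert (H0 : is_lim (fun x => GG 0 x - ln 2 ^ 0 * x) p_infty 0).
    { eapply L_ext; [|apply is_lim_const]. exists 0. intros. unfold GG. simpl. ring. }
    split; auto.
  - destruct IHk as [IH1 IH2]. 
    assert (H : is_lim (fun x => GG (S k) x - ln 2 ^ S k * x) p_infty 0).
    { eapply L_ext; cycle 1.
      - replace (Finite 0) with (Finite (0 + ln 2 * 0)) by (f_equal; ring).
        apply L_plus. apply (L_comp (fun y => g y - y * ln 2)). apply g_lin_lim. exact IH2.
        apply (is_lim_scal_l _ (ln 2) _ 0) in IH1. simpl in IH1. exact IH1.
      - exists 0. intros. unfold GG. simpl. ring. }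
    split; auto.
Qed.

Lemma I3 k : is_lim (fun x => Rpower 2 (GG k x) * (GG (S k) x - HH (S k) x)) p_infty (euler_gamma - 1/2).
Proof.
  induction k.
  - eapply L_ext; [|apply base_lim]. exists 0. intros. reflexivity.
  - set (Q := fun x => Rpower 2 (GG k x) * (GG (S k) x - HH (S k) x)) in IHk.
    destruct (I2 k) as [J1 J2]. destruct (I2 (S k)) as [J3 J4].
    assert (HD : is_lim (fun x => GG (S k) x - HH (S k) x) p_infty 0).
    { eapply L_ext; cycle 1.
      - replace (Finite 0) with (Finite (0 * (euler_gamma - 1/2))) by (f_equal; ring).
        apply L_mult. apply (L_comp E2). apply L_E2. exact J2. exact IHk.
      - exists 0. intros x _. unfold E2. unfold Q. rewrite <- Rmult_assoc, <- Rpower_plus.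
        replace (- GG k x + GG k x) with 0 by ring. rewrite Rpower_O by lra. ring. }
    assert (HB : is_lim (HH (S k)) p_infty p_infty).
    { eapply L_ext; [|apply (L_inf_minus _ _ J4 HD)]. exists 0. intros. ring. }
    assert (HG : is_lim (fun x => GG k x - GG (S k) x) p_infty p_infty).
    { eapply L_ext; cycle 1.
      - apply (L_inf_minus (fun x => (1 - ln 2) * GG k x) (fun x => g (GG k x) - GG k x * ln 2)).
        apply is_lim_spec. apply is_lim_spec in J2. intros A.
        assert (0 < 1 - ln 2).
        { assert (ln 2 < 1). { rewrite <- ln_exp. apply ln_increasing. lra. pose proof (exp_ineq1 1). lra. } lra. }
        destruct (J2 (A / (1 - ln 2))) as [M HM]. exists M. intros x Hx. specialize (HM x Hx).
        apply Rmult_lt_reg_r with (/ (1 - ln 2)). apply Rinv_0_lt_compat; lra.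
        replace ((1 - ln 2) * GG k x * / (1 - ln 2)) with (GG k x) by (field; lra). exact HM.
        apply (L_comp (fun y => g y - y * ln 2)). apply g_lin_lim. exact J2.
      - exists 0. intros. unfold GG. simpl. ring. }
    assert (HT1 : is_lim (fun x => Rpower 2 (GG (S k) x) * (g (GG (S k) x) - g (HH (S k) x))) p_infty 0).
    { apply L_squeeze0 with (b := fun x => 70 * (E2 (GG k x - GG (S k) x) * Rabs (Q x))).
      - apply is_lim_spec in J4. apply is_lim_spec in HB. apply is_lim_spec in HD.
        destruct (J4 5) as [M1 H1]. destruct (HB 5) as [M2 H2].
        destruct (HD (mkposreal 1 Rlt_0_1)) as [M3 H3].
        exists (Rmax M1 (Rmax M2 M3)). intros x Hx.
        pose proof (Rmax_l M1 (Rmax M2 M3)). pose proof (Rmax_r M1 (Rmax M2 M3)).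
        pose proof (Rmax_l M2 M3). pose proof (Rmax_r M2 M3).
        specialize (H1 x ltac:(lra)). specialize (H2 x ltac:(lra)). specialize (H3 x ltac:(lra)).
        cbv beta in H3. rewrite Rminus_0_r in H3.
        assert (H3b : Rabs (GG (S k) x - HH (S k) x) <= 1) by (left; exact H3).
        pose proof (g_lip (GG (S k) x) (HH (S k) x) ltac:(lra) ltac:(lra) H3b) as HL.
        rewrite Rabs_mult, Rabs_right by (apply Rle_ge, Rlt_le; unfold Rpower; apply exp_pos).
        assert (E : E2 (GG k x - GG (S k) x) * Rabs (Q x) = Rpower 2 (GG (S k) x) * Rabs (GG (S k) x - HH (S k) x)).
        { unfold Q, E2. rewrite Rabs_mult, Rabs_right by (apply Rle_ge, Rlt_le; unfold Rpower; apply exp_pos).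
          rewrite <- Rmult_assoc, <- Rpower_plus. f_equal. f_equal. ring. }
        rewrite E. assert (0 < Rpower 2 (GG (S k) x)) by (unfold Rpower; apply exp_pos). nra.
      - replace (Finite 0) with (Finite (70 * (0 * Rabs (euler_gamma - 1/2)))) by (f_equal; ring).
        apply (is_lim_scal_l _ 70 p_infty (Finite (0 * Rabs (euler_gamma - 1/2)))).
        apply L_mult. apply (L_comp E2). apply L_E2. exact HG.
        apply (is_lim_Rabs Q p_infty (euler_gamma - 1/2)). exact IHk. }
    assert (HT2 : is_lim (fun x => Rpower 2 (GG (S k) x - HH (S k) x) *
                      (Rpower 2 (HH (S k) x) * (g (HH (S k) x) - h (HH (S k) x)))) p_infty (euler_gamma - 1/2)).
    { replace (Finite (euler_gamma - 1/2)) with (Finite (1 * (euler_gamma - 1/2))) by (f_equal; ring).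
      apply L_mult. apply L_rp2_1. exact HD.
      apply (L_comp (fun y => Rpower 2 y * (g y - h y))). apply base_lim. exact HB. }
    eapply L_ext; cycle 1.
    + replace (Finite (euler_gamma - 1/2)) with (Finite (0 + (euler_gamma - 1/2))) by (f_equal; ring).
      apply L_plus. exact HT1. exact HT2.
    + exists 0. intros x _. change (GG (S (S k)) x) with (g (GG (S k) x)).
      change (HH (S (S k)) x) with (h (HH (S k) x)).
      rewrite <- Rmult_assoc, <- Rpower_plus. replace (GG (S k) x - HH (S k) x + HH (S k) x) with (GG (S k) x) by ring.
      ring.
Qed.

Theorem mainTheorem10 (n : nat) (hn : (1 <= n)%nat) :
  is_lim
    (fun x : R => Rpower 2 (x * ln 2 ^ (n - 1)) * (Nat.iter n g x - Nat.iter n h x))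
    p_infty (euler_gamma - 1 / 2).
Proof.
  destruct n as [|k]. lia. replace (S k - 1)%nat with k by lia.
  destruct (I2 k) as [J1 J2].
  assert (Hd : is_lim (fun x => x * ln 2 ^ k - GG k x) p_infty 0).
  { apply (is_lim_scal_l _ (-1) p_infty 0) in J1. simpl in J1.
    replace (-1 * 0) with 0 in J1 by ring.
    eapply L_ext; [|exact J1]. exists 0. intros. ring. }
  eapply L_ext; cycle 1.
  - replace (Finite (euler_gamma - 1/2)) with (Finite (1 * (euler_gamma - 1/2))) by (f_equal; ring).
    apply L_mult. apply (L_rp2_1 _ Hd). apply I3.
  - exists 0. intros x _. rewrite <- Rmult_assoc, <- Rpower_plus.
    replace (x * ln 2 ^ k - GG k x + GG k x) with (x * ln 2 ^ k) by ring. reflexivity.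
Qed.
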